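(* The map $\phi:\mathcal{B}\to\mathrm{GL}(2,\mathbb{Z}[t,t^{-1},(1+t)^{-1}])$ is an injective group homomorphism satisfying $\det\phi(A)=\det A$ for all $A\in\mathcal{B}$.
   Context: For a matrix $A$ with Laurent polynomial entries, $\overline{A}$ denotes the matrix obtained by substituting $t\mapsto t^{-1}$ in every entry. Let $J_3=\begin{pmatrix}1&-t^{-1}&-t^{-1}\\-t&1&-t^{-1}\\-t&-t&1\end{pmatrix}$, $v=(t,t^2,t^3)$ (a row vector) and $\vec{1}=(1,1,1)^T$. The formal Burau group is $\mathcal{B}=\{A\in\mathrm{GL}(3,\mathbb{Z}[t,t^{-1}]) : vA=v,\ A\vec 1=\vec 1,\ \overline{A}J_3A^T=J_3\}$. For $A=(A_{ij})\in\mathcal{B}$ put, for $k=1,2$, $f_{k1}=A_{k1}(1+t+t^2)-1$, $f_{k2}=A_{k1}+A_{k2}(1+t)-1$, and $g_{kl}=f_{kl}/(t(1+t))$. Define $\phi(A)=\begin{pmatrix}g_{11}&g_{12}\\ t^{-1}g_{11}+(1+t)g_{21}& t^{-1}g_{12}+(1+t)g_{22}\end{pmatrix}$. *)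

(* Defs.v *)
From HB Require Import structures.
From mathcomp Require Import all_boot all_order all_algebra.
Set Implicit Arguments. Unset Strict Implicit. Unset Printing Implicit Defensive.
Import GRing.Theory.
Local Open Scope ring_scope.
Local Open Scope quotient_scope.
Notation tofrac := (@FracField.tofrac _).
Notation "x %:F" := (@FracField.tofrac _ x) : ring_scope.

(* Ambient field: rational functions K = Frac(Z[t]).  The rings
   Z[t,t^-1] and Z[t,t^-1,(1+t)^-1] are realised as subrings of K. *)
Definition K := {fraction {poly int}}.

Definition tK : K := ('X : {poly int})%:F.

Definition laurent (x : K) : Prop :=
  exists (n : nat) (p : {poly int}), x = p%:F / tK ^+ n.

Definition laurent1t (x : K) : Prop :=
  exists (n m : nat) (p : {poly int}), x = p%:F / (tK ^+ n * (1 + tK) ^+ m).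

Definition ev_inv (p : {poly int}) : K :=
  (map_poly (fun c : int => (c%:P : {poly int})%:F) p).[tK^-1].

Definition bar (x : K) : K :=
  let r := repr x in ev_inv (\n_r) / ev_inv (\d_r).

Definition barmx m n (A : 'M[K]_(m, n)) : 'M[K]_(m, n) := map_mx bar A.

(* GL(n, R) for the subring R given by predicate P: entries in R and
   determinant a unit of R *)
Definition inGL (P : K -> Prop) n (A : 'M[K]_n) : Prop :=
  (forall i j, P (A i j)) /\ \det A != 0 /\ P (\det A)^-1.

Definition J3 : 'M[K]_3 :=
  \matrix_(i < 3, j < 3)
    (if i == j :> nat then 1 else if (i < j)%N then - tK^-1 else - tK).

Definition vrow : 'rV[K]_3 := \row_(j < 3) tK ^+ j.+1.

Definition ones : 'cV[K]_3 := \col_(i < 3) 1.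

Definition burau (A : 'M[K]_3) : Prop :=
  inGL laurent A /\ vrow *m A = vrow /\ A *m ones = ones /\
  barmx A *m J3 *m A^T = J3.

Definition i0 : 'I_3 := @Ordinal 3 0 isT.
Definition i1 : 'I_3 := @Ordinal 3 1 isT.

Definition fk1 (A : 'M[K]_3) (k : 'I_3) : K := A k i0 * (1 + tK + tK ^+ 2) - 1.
Definition fk2 (A : 'M[K]_3) (k : 'I_3) : K := A k i0 + A k i1 * (1 + tK) - 1.
Definition gk1 (A : 'M[K]_3) (k : 'I_3) : K := fk1 A k / (tK * (1 + tK)).
Definition gk2 (A : 'M[K]_3) (k : 'I_3) : K := fk2 A k / (tK * (1 + tK)).

Definition phi (A : 'M[K]_3) : 'M[K]_2 :=
  \matrix_(i < 2, j < 2)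
    (if i == 0 :> nat then (if j == 0 :> nat then gk1 A i0 else gk2 A i0)
     else if j == 0 :> nat then tK^-1 * gk1 A i0 + (1 + tK) * gk1 A i1
          else tK^-1 * gk2 A i0 + (1 + tK) * gk2 A i1).

(* Main.v *)
Require Import Defs.
From mathcomp Require Import all_boot all_order all_algebra.
From mathcomp Require Import ring.
Set Implicit Arguments. Unset Strict Implicit. Unset Printing Implicit Defensive.
Import GRing.Theory.
Local Open Scope ring_scope.

Lemma natify (R : Type) n (A : 'M[R]_n.+1) :
  exists B : nat -> nat -> R, forall i j, A i j = B i j.
Proof. by exists (fun i j => A (inord i) (inord j)) => i j; rewrite !inord_val. Qed.

Section G.
Variable F : fieldType.
Variable t : F.
Hypothesis t0 : t != 0.
Hypothesis t1 : 1 + t != 0.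

Definition vrowG : 'rV[F]_3 := \row_(j < 3) t ^+ j.+1.
Definition onesG : 'cV[F]_3 := \col_(i < 3) 1.
Definition fk1G (A : 'M[F]_3) (k : 'I_3) : F := A k i0 * (1 + t + t ^+ 2) - 1.
Definition fk2G (A : 'M[F]_3) (k : 'I_3) : F := A k i0 + A k i1 * (1 + t) - 1.
Definition gk1G (A : 'M[F]_3) (k : 'I_3) : F := fk1G A k / (t * (1 + t)).
Definition gk2G (A : 'M[F]_3) (k : 'I_3) : F := fk2G A k / (t * (1 + t)).
Definition phiG (A : 'M[F]_3) : 'M[F]_2 :=
  \matrix_(i < 2, j < 2)
    (if i == 0 :> nat then (if j == 0 :> nat then gk1G A i0 else gk2G A i0)
     else if j == 0 :> nat then t^-1 * gk1G A i0 + (1 + t) * gk1G A i1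
          else t^-1 * gk2G A i0 + (1 + t) * gk2G A i1).

Lemma consG (A : 'M[F]_3) (B : nat -> nat -> F) : (forall i j, A i j = B i j) ->
  vrowG *m A = vrowG -> A *m onesG = onesG ->
  [/\ B 0%N 2%N = 1 - B 0%N 0%N - B 0%N 1%N, B 1%N 2%N = 1 - B 1%N 0%N - B 1%N 1%N,
      B 2%N 0%N = (t - t * B 0%N 0%N - t^+2 * B 1%N 0%N)/t^+3,
      B 2%N 1%N = (t^+2 - t * B 0%N 1%N - t^+2 * B 1%N 1%N)/t^+3 &
      B 2%N 2%N = (t^+3 - t * B 0%N 2%N - t^+2 * B 1%N 2%N)/t^+3].
Proof.
move=> E H1 H2.
have c j : (j < 3)%N -> B 2 j = (t^+j.+1 - t * B 0 j - t^+2 * B 1 j)/t^+3.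
  move=> hj; have := congr1 (fun M : 'M[F]_(1,3) => M ord0 (Ordinal hj)) H1.
  rewrite !mxE !big_ord_recr big_ord0 /= !mxE !E /= => h.
  by rewrite -h; field; rewrite ?expf_neq0.
have r i : (i < 3)%N -> B i 2 = 1 - B i 0 - B i 1.
  move=> hi; have := congr1 (fun M : 'M[F]_(3,1) => M (Ordinal hi) ord0) H2.
  rewrite !mxE !big_ord_recr big_ord0 /= !mxE !E /= => h.
  rewrite -h; ring.
by split; [apply: r|apply: r|apply: c|apply: c|apply: c].
Qed.

Lemma phiG_mul (A B : 'M[F]_3) : vrowG *m A = vrowG -> A *m onesG = onesG ->
  vrowG *m B = vrowG -> B *m onesG = onesG -> phiG (A *m B) = phiG A *m phiG B.
Proof.
move=> HA1 HA2 HB1 HB2.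
have [a Ea] := natify A; have [b Eb] := natify B.
have [a02 a12 a20 a21 a22] := consG Ea HA1 HA2.
have [b02 b12 b20 b21 b22] := consG Eb HB1 HB2.
apply/matrixP => i j.
rewrite /phiG /gk1G /gk2G /fk1G /fk2G !mxE !big_ord_recr !big_ord0 /= !mxE.
rewrite !Ea !Eb /=.
rewrite ?a20 ?a21 ?a22 ?b20 ?b21 ?b22 ?a02 ?a12 ?b02 ?b12.
case: i => [[|[|//]] ?]; case: j => [[|[|//]] ?] /=; field; rewrite ?t0 ?t1 ?mulf_neq0 ?expf_neq0 //.
Qed.

Lemma phiG1 : phiG 1 = 1.
Proof.
apply/matrixP => i j; rewrite /phiG /gk1G /gk2G /fk1G /fk2G !mxE /=.
case: i => [[|[|//]] ?]; case: j => [[|[|//]] ?] /=; field; rewrite ?t0 ?t1 ?mulf_neq0 ?expf_neq0 //.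
Qed.

Lemma det2 (R : comNzRingType) (A : 'M[R]_2) : \det A = A 0 0 * A 1 1 - A 0 1 * A 1 0.
Proof.
have [B E] := natify A.
rewrite (expand_det_row _ 0) !big_ord_recr big_ord0 /= /cofactor !det_mx11 !mxE !E /=.
ring.
Qed.

Lemma det3 (R : comNzRingType) (A : 'M[R]_3) : \det A =
  A 0 0 * (A 1 1 * A 2 2 - A 1 2 * A 2 1)
 - A 0 1 * (A 1 0 * A 2 2 - A 1 2 * A 2 0)
 + A 0 2 * (A 1 0 * A 2 1 - A 1 1 * A 2 0).
Proof.
have [B E] := natify A.
rewrite (expand_det_row _ 0) !big_ord_recr big_ord0 /= /cofactor !det2 !mxE !E /=.
ring.
Qed.

Lemma phiG_det (A : 'M[F]_3) : vrowG *m A = vrowG -> A *m onesG = onesG ->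
  \det (phiG A) = \det A.
Proof.
move=> HA1 HA2.
have [a Ea] := natify A.
have [a02 a12 a20 a21 a22] := consG Ea HA1 HA2.
rewrite det2 det3 /phiG /gk1G /gk2G /fk1G /fk2G !mxE /= !Ea /=.
rewrite ?a20 ?a21 ?a22 ?a02 ?a12.
field; rewrite ?t0 ?t1 ?mulf_neq0 ?expf_neq0 //.
Qed.

Hypothesis t2 : 1 + t + t ^+ 2 != 0.

Lemma recover (A : 'M[F]_3) :
  [/\ A i0 i0 = (phiG A 0 0 * (t*(1+t)) + 1)/(1 + t + t ^+ 2),
      A i0 i1 = (phiG A 0 1 * (t*(1+t)) + 1 - A i0 i0)/(1+t),
      A i1 i0 = (((phiG A 1 0 - phiG A 0 0 / t)/(1+t)) * (t*(1+t)) + 1)/(1 + t + t ^+ 2) &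
      A i1 i1 = (((phiG A 1 1 - phiG A 0 1 / t)/(1+t)) * (t*(1+t)) + 1 - A i1 i0)/(1+t)].
Proof.
have [a Ea] := natify A.
rewrite /phiG /gk1G /gk2G /fk1G /fk2G !mxE /= !Ea /=.
by split; field; rewrite ?t0 ?t1 ?t2 ?mulf_neq0 ?expf_neq0.
Qed.

Lemma phiG_inj (A B : 'M[F]_3) : vrowG *m A = vrowG -> A *m onesG = onesG ->
  vrowG *m B = vrowG -> B *m onesG = onesG -> phiG A = phiG B -> A = B.
Proof.
move=> HA1 HA2 HB1 HB2 H.
have [r00 r01 r10 r11] := recover A.
have [s00 s01 s10 s11] := recover B.
have e00 : A i0 i0 = B i0 i0 by rewrite r00 s00 H.
have e01 : A i0 i1 = B i0 i1 by rewrite r01 s01 H e00.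
have e10 : A i1 i0 = B i1 i0 by rewrite r10 s10 H.
have e11 : A i1 i1 = B i1 i1 by rewrite r11 s11 H e10.
have [a Ea] := natify A; have [b Eb] := natify B.
move: e00 e01 e10 e11; rewrite !Ea !Eb /= => e00 e01 e10 e11.
have [a02 a12 a20 a21 a22] := consG Ea HA1 HA2.
have [b02 b12 b20 b21 b22] := consG Eb HB1 HB2.
apply/matrixP => i j; rewrite Ea Eb.
case: i => [[|[|[|//]]] ?]; case: j => [[|[|[|//]]] ?] /=;
rewrite ?a20 ?a21 ?a22 ?b20 ?b21 ?b22 ?a02 ?a12 ?b02 ?b12 ?e00 ?e01 ?e10 ?e11 //.
Qed.
End G.

Lemma tK_neq0 : tK != 0.
Proof. by rewrite /tK tofrac_eq0 polyX_eq0. Qed.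

Lemma tK1_neq0 : 1 + tK != 0.
Proof.
rewrite /tK -tofrac1 -tofracD tofrac_eq0; apply/eqP => /(congr1 (horner^~ 0)).
by rewrite !hornerE.
Qed.

Lemma tK2_neq0 : 1 + tK + tK ^+ 2 != 0.
Proof.
rewrite /tK -tofrac1 -tofracXn -!tofracD tofrac_eq0; apply/eqP => /(congr1 (horner^~ 0)).
by rewrite !hornerE.
Qed.

Lemma phiE A : phi A = phiG tK A. Proof. by []. Qed.
Lemma vrowE : vrow = vrowG tK. Proof. by []. Qed.
Lemma onesE : ones = onesG K. Proof. by []. Qed.

Lemma G_add (F : fieldType) (t p q : F) n m n' m' : t != 0 -> 1 + t != 0 ->
  p / (t ^+ n * (1 + t) ^+ m) + q / (t ^+ n' * (1 + t) ^+ m') =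
  (p * t ^+ n' * (1 + t) ^+ m' + q * t ^+ n * (1 + t) ^+ m) / (t ^+ (n + n') * (1 + t) ^+ (m + m')).
Proof. move=> t0 t1; rewrite !exprD; field; rewrite ?mulf_neq0 ?expf_neq0 //. Qed.

Lemma G_mul (F : fieldType) (t p q : F) n m n' m' : t != 0 -> 1 + t != 0 ->
  p / (t ^+ n * (1 + t) ^+ m) * (q / (t ^+ n' * (1 + t) ^+ m')) =
  (p * q) / (t ^+ (n + n') * (1 + t) ^+ (m + m')).
Proof. move=> t0 t1; rewrite !exprD; field; rewrite ?mulf_neq0 ?expf_neq0 //. Qed.

Lemma G_opp (F : fieldType) (p d : F) : - (p / d) = (- p) / d.
Proof. by rewrite mulNr. Qed.

Lemma G_one (F : fieldType) (t p : F) : p = p / (t ^+ 0 * (1 + t) ^+ 0).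
Proof. by rewrite !expr0 mulr1 divr1. Qed.

Lemma G_tinv (F : fieldType) (t : F) : t^-1 = 1 / (t ^+ 1 * (1 + t) ^+ 0).
Proof. by rewrite expr0 expr1 ?mulr1 ?mul1r. Qed.

Lemma G_uinv (F : fieldType) (t : F) : (1 + t)^-1 = 1 / (t ^+ 0 * (1 + t) ^+ 1).
Proof. by rewrite expr0 expr1 ?mulr1 ?mul1r. Qed.

Lemma l1_add x y : laurent1t x -> laurent1t y -> laurent1t (x + y).
Proof.
move=> [n [m [p ->]]] [n' [m' [q ->]]].
exists (n + n')%N, (m + m')%N, (p * 'X^n' * (1 + 'X) ^+ m' + q * 'X^n * (1 + 'X) ^+ m).
rewrite rmorphD !rmorphM !rmorphXn rmorphD rmorph1.
exact: (G_add _ _ _ _ _ _ tK_neq0 tK1_neq0).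
Qed.

Lemma l1_mul x y : laurent1t x -> laurent1t y -> laurent1t (x * y).
Proof.
move=> [n [m [p ->]]] [n' [m' [q ->]]].
exists (n + n')%N, (m + m')%N, (p * q).
rewrite rmorphM.
exact: (G_mul _ _ _ _ _ _ tK_neq0 tK1_neq0).
Qed.

Lemma l1_opp x : laurent1t x -> laurent1t (- x).
Proof. move=> [n [m [p ->]]]; exists n, m, (- p); by rewrite rmorphN G_opp. Qed.

Lemma l1_exp x k : laurent1t x -> laurent1t (x ^+ k).
Proof.
move=> hx; elim: k => [|k ih].
  by rewrite expr0; exists 0%N, 0%N, 1; rewrite rmorph1 -G_one.
by rewrite exprS; apply: l1_mul.
Qed.

Lemma l1_1 : laurent1t 1.
Proof. by exists 0%N, 0%N, 1; rewrite rmorph1 -G_one. Qed.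

Lemma l1_t : laurent1t tK.
Proof. by exists 0%N, 0%N, 'X; rewrite -G_one. Qed.

Lemma l1_tinv : laurent1t tK^-1.
Proof. by exists 1%N, 0%N, 1; rewrite rmorph1 -G_tinv. Qed.

Lemma l1_uinv : laurent1t (1 + tK)^-1.
Proof. by exists 0%N, 1%N, 1; rewrite rmorph1 -G_uinv. Qed.

Lemma l1_laur x : laurent x -> laurent1t x.
Proof. by move=> [n [p ->]]; exists n, 0%N, p; rewrite expr0 mulr1. Qed.

Ltac l1 := repeat match goal with
  | |- laurent1t (?x + ?y) => apply: l1_add
  | |- laurent1t (?x * ?y) => apply: l1_mul
  | |- laurent1t (- ?x) => apply: l1_opp
  | |- laurent1t (?x ^+ ?k) => apply: l1_exp
  | |- laurent1t (tK^-1) => exact: l1_tinv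
  | |- laurent1t ((1 + tK)^-1) => exact: l1_uinv
  | |- laurent1t (?x * ?y)^-1 => rewrite invfM
  | |- laurent1t 1 => exact: l1_1
  | |- laurent1t tK => exact: l1_t
  | |- laurent1t _ => apply: l1_laur
  end.

Lemma burau_cons A : burau A -> vrowG tK *m A = vrowG tK /\ A *m onesG K = onesG K.
Proof. by move=> [_ [h1 [h2 _]]]. Qed.

Lemma x_det A : burau A -> \det (phi A) = \det A.
Proof.
move=> /burau_cons [h1 h2].
exact: (phiG_det tK_neq0 tK1_neq0 h1 h2).
Qed.

Lemma x_mul A B : burau A -> burau B -> phi (A *m B) = phi A *m phi B.
Proof.
move=> /burau_cons [h1 h2] /burau_cons [h3 h4].
exact: (phiG_mul tK_neq0 tK1_neq0 h1 h2 h3 h4).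
Qed.

Lemma x_inj A B : burau A -> burau B -> phi A = phi B -> A = B.
Proof.
move=> /burau_cons [h1 h2] /burau_cons [h3 h4].
exact: (phiG_inj tK_neq0 tK1_neq0 tK2_neq0 h1 h2 h3 h4).
Qed.

Lemma x_one : phi 1 = 1.
Proof. exact: (phiG1 tK_neq0 tK1_neq0). Qed.

Lemma x_gl A : burau A -> inGL laurent1t (phi A).
Proof.
move=> hA; have hD := x_det hA; case: hA => [[he [hd hi]] _].
split; last by rewrite hD; split => //; exact: l1_laur.
move=> i j; rewrite /phi /gk1 /gk2 /fk1 /fk2 !mxE.
(case: ifP => _; case: ifP => _; l1; exact: he).
Qed.

Theorem lemma3p4 :
  (forall A : 'M[K]_3, burau A -> inGL laurent1t (phi A)) /\
  phi 1 = 1 /\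
  (forall A B : 'M[K]_3, burau A -> burau B -> phi (A *m B) = phi A *m phi B) /\
  (forall A B : 'M[K]_3, burau A -> burau B -> phi A = phi B -> A = B) /\
  (forall A : 'M[K]_3, burau A -> \det (phi A) = \det A).
Proof.
split; first exact: x_gl.
split; first exact: x_one.
split; first exact: x_mul.
split; first exact: x_inj.
exact: x_det.
Qed.
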